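(* Let $\alpha>0$, let $\mathscr{K}$ be a convex feasible functional, and consider the augmented dual ascent scheme $$x^{n+1} = \operatorname{arg\,min}_{x} \mathscr{K}(x)+\langle x,\Lambda^n\rangle +\frac{\alpha}{2}\|x\|^2,\qquad \Lambda^{n+1} = \Lambda^{n} + \alpha\mathcal{P}_{\mathcal{M}^\perp}(x^{n+1}),\qquad \Lambda^0=0.$$ Define $\mathscr{J}(x)=\mathscr{K}(x)+\frac{\alpha}{2}\|\mathcal{P}_{\mathcal{M}}x\|^2$ and $h(\Lambda)=\min_x \mathscr{J}(x)+\langle x,\mathcal{P}_{\mathcal{M}^\perp}\Lambda\rangle$. Suppose that $(\Lambda^{n})_{n=1}^\infty$ is bounded. Then the set of maximizers of $h$ is non-empty and $(\Lambda^{n})_{n=1}^\infty$ is Fej\'{e}r monotone with respect to it. Moreover, if $c$ is the supremum of $h$ then $c-h(\Lambda^n)=o(1/n)$.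
   Context: $\mathcal{H}$ is a finite dimensional Hilbert space, $\mathcal{M}\subset\mathcal{H}$ a linear subspace, $\mathcal{P}_{\mathcal{M}}$, $\mathcal{P}_{\mathcal{M}^\perp}$ the orthogonal projections onto $\mathcal{M}$, $\mathcal{M}^\perp$. A functional is called feasible if it is lower semi-continuous, proper, bounded below, and satisfies $\lim_{\|x\|\rightarrow\infty}\mathscr{K}(x)/\|x\|=\infty$. *)

(* Defs.v *)
From HB Require Import structures.
From mathcomp Require Import all_boot all_order all_algebra.
From mathcomp Require Import all_classical all_reals all_analysis.
Set Implicit Arguments. Unset Strict Implicit. Unset Printing Implicit Defensive.
Import Order.TTheory GRing.Theory Num.Theory.
Import numFieldTopology.Exports numFieldNormedType.Exports.
Local Open Scope ring_scope.
Local Open Scope classical_set_scope.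

(* The finite-dimensional Hilbert space H is modelled as R^n = 'rV[R]_n
   with the Euclidean inner product. *)
Section Defs.
Variables (R : realType) (n : nat).
Implicit Types (x y : 'rV[R]_n).

Definition dotp x y : R := (x *m y^T) 0 0.
Definition enorm x : R := Num.sqrt (dotp x x).

(* A linear subspace M of R^n is given as the row space of a square matrix
   M.  Its orthogonal complement is the row space of kermx M^T, i.e. the
   set of v with v *m M^T = 0 (v orthogonal to every row of M). *)
Definition orth_compl (M : 'M[R]_n) : 'M[R]_n := kermx M^T.

Definition projM (M : 'M[R]_n) x : 'rV[R]_n := x *m proj_mx M (orth_compl M).
Definition projMperp (M : 'M[R]_n) x : 'rV[R]_n :=
  x *m proj_mx (orth_compl M) M.

Local Open Scope ereal_scope.

Definition proper_fun (K : 'rV[R]_n -> \bar R) :=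
  (exists x, K x < +oo) /\ (forall x, -oo < K x).

Definition bounded_below_fun (K : 'rV[R]_n -> \bar R) :=
  exists m : R, forall x, m%:E <= K x.

Definition supercoercive (K : 'rV[R]_n -> \bar R) :=
  forall A : R, exists r : R, forall x, (r < enorm x)%R ->
    (A * enorm x)%:E <= K x.

Definition feasible (K : 'rV[R]_n -> \bar R) :=
  lower_semicontinuous K /\ proper_fun K /\ bounded_below_fun K /\
  supercoercive K.

Definition convex_fun (K : 'rV[R]_n -> \bar R) :=
  forall x y (t : R), (0 <= t <= 1)%R ->
    K (t *: x + (1 - t) *: y)%R <= t%:E * K x + (1 - t)%:E * K y.

End Defs.

(* Main.v *)
Require Import Defs.
From HB Require Import structures.
From mathcomp Require Import all_boot all_order all_algebra.
From mathcomp Require Import all_classical all_reals all_analysis.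
From mathcomp Require Import ring lra zify.
Import Order.TTheory GRing.Theory Num.Theory.
Import numFieldTopology.Exports numFieldNormedType.Exports.
Set Implicit Arguments. Unset Strict Implicit. Unset Printing Implicit Defensive.
Local Open Scope ring_scope.
Local Open Scope classical_set_scope.


Section Aux.
Variables (R : realType) (d : nat).
Implicit Types (x y z : 'rV[R]_d).

Lemma dotpE x y : dotp x y = \sum_j x 0 j * y 0 j.
Proof. by rewrite /dotp mxE; apply: eq_bigr => j _; rewrite mxE. Qed.

Lemma dotpC x y : dotp x y = dotp y x.
Proof. by rewrite !dotpE; apply: eq_bigr => j _; rewrite mulrC. Qed.

Lemma dotpDl x y z : dotp (x + y) z = dotp x z + dotp y z.
Proof. by rewrite !dotpE -big_split; apply: eq_bigr => j _; rewrite mxE mulrDl. Qed.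

Lemma dotpZl (a : R) x y : dotp (a *: x) y = a * dotp x y.
Proof. by rewrite !dotpE mulr_sumr; apply: eq_bigr => j _; rewrite mxE mulrA. Qed.

Lemma dotpNl x y : dotp (- x) y = - dotp x y.
Proof. by rewrite -scaleN1r dotpZl mulN1r. Qed.

Lemma dotpBl x y z : dotp (x - y) z = dotp x z - dotp y z.
Proof. by rewrite dotpDl dotpNl. Qed.

Lemma dotpDr x y z : dotp x (y + z) = dotp x y + dotp x z.
Proof. by rewrite dotpC dotpDl !(dotpC x). Qed.

Lemma dotpZr (a : R) x y : dotp x (a *: y) = a * dotp x y.
Proof. by rewrite dotpC dotpZl dotpC. Qed.

Lemma dotpNr x y : dotp x (- y) = - dotp x y.
Proof. by rewrite dotpC dotpNl dotpC. Qed.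

Lemma dotpBr x y z : dotp x (y - z) = dotp x y - dotp x z.
Proof. by rewrite dotpDr dotpNr. Qed.

Lemma dotp0l y : dotp 0 y = 0.
Proof. by rewrite -(scale0r (0 : 'rV[R]_d)) dotpZl mul0r. Qed.

Lemma dotp0r y : dotp y 0 = 0.
Proof. by rewrite dotpC dotp0l. Qed.

Lemma dotp_ge0 x : 0 <= dotp x x.
Proof. by rewrite dotpE; apply: sumr_ge0 => j _; rewrite -expr2 sqr_ge0. Qed.

Lemma dotp_eq0 x : dotp x x = 0 -> x = 0.
Proof.
rewrite dotpE => /eqP; rewrite psumr_eq0; last by move=> j _; rewrite -expr2 sqr_ge0.
move=> /allP H; apply/rowP => j; rewrite mxE.
by have /(_ (mem_index_enum j)) := H j; rewrite mulf_eq0 orbb => /eqP.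
Qed.

Lemma enorm_sq x : enorm x ^+ 2 = dotp x x.
Proof. by rewrite /enorm sqr_sqrtr // dotp_ge0. Qed.

Lemma enorm_le x y : dotp x x <= dotp y y -> enorm x <= enorm y.
Proof. by move=> H; rewrite /enorm ler_sqrt // dotp_ge0. Qed.

End Aux.


Section Proj.
Variables (R : realType) (d : nat) (M : 'M[R]_d).
Implicit Types (x y z : 'rV[R]_d).
Local Notation Mp := (orth_compl M).
Local Notation P := (projMperp M).
Local Notation Q := (projM M).

Lemma orth_sub u v : (u <= M)%MS -> (v <= Mp)%MS -> dotp u v = 0.
Proof.
move=> /submxP[w ->] /sub_kermxP vM.
rewrite /dotp -mulmxA.
have -> : (M *m v^T) = (v *m M^T)^T by rewrite trmx_mul trmxK.
by rewrite vM trmx0 mulmx0 mxE.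
Qed.

Lemma capM0 : (M :&: Mp = 0)%MS.
Proof.
apply/eqP/rowV0P => v; rewrite sub_capmx => /andP[vM vMp].
by apply: dotp_eq0; apply: orth_sub.
Qed.

Lemma fullM (v : 'rV[R]_d) : (v <= M + Mp)%MS.
Proof.
apply: submx_full; rewrite /row_full.
have := mxrank_sum_cap M Mp; rewrite capM0 mxrank0 addn0 => ->.
rewrite /orth_compl mxrank_ker mxrank_tr subnKC //; exact: rank_leq_col.
Qed.

Lemma capMp0 : (Mp :&: M = 0)%MS.
Proof. by rewrite capmxC capM0. Qed.

Lemma PQ x : P x + Q x = x.
Proof.
by rewrite /projMperp /projM addrC add_proj_mx // ?capM0 // fullM.
Qed.

Lemma P_sub x : (P x <= Mp)%MS. Proof. exact: proj_mx_sub. Qed.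
Lemma Q_sub x : (Q x <= M)%MS. Proof. exact: proj_mx_sub. Qed.

Lemma PP x : P (P x) = P x.
Proof. by rewrite {1}/projMperp proj_mx_id // ?capMp0 // P_sub. Qed.
Lemma QQ x : Q (Q x) = Q x.
Proof. by rewrite {1}/projM proj_mx_id // ?capM0 // Q_sub. Qed.
Lemma PQ0 x : P (Q x) = 0.
Proof. by rewrite {1}/projMperp proj_mx_0 // ?capMp0 // Q_sub. Qed.
Lemma QP0 x : Q (P x) = 0.
Proof. by rewrite {1}/projM proj_mx_0 // ?capM0 // P_sub. Qed.

Lemma PD x y : P (x + y) = P x + P y. Proof. by rewrite /projMperp mulmxDl. Qed.
Lemma PB x y : P (x - y) = P x - P y. Proof. by rewrite /projMperp mulmxBl. Qed.
Lemma PZ (a : R) x : P (a *: x) = a *: P x. Proof. by rewrite /projMperp scalemxAl. Qed.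
Lemma QD x y : Q (x + y) = Q x + Q y. Proof. by rewrite /projM mulmxDl. Qed.
Lemma QB x y : Q (x - y) = Q x - Q y. Proof. by rewrite /projM mulmxBl. Qed.
Lemma P0 : P 0 = 0. Proof. by rewrite /projMperp mul0mx. Qed.

Lemma dotQP x y : dotp (Q x) (P y) = 0.
Proof. by apply: orth_sub; [apply: Q_sub | apply: P_sub]. Qed.
Lemma dotPQ x y : dotp (P x) (Q y) = 0.
Proof. by rewrite dotpC dotQP. Qed.

Lemma dotP x y : dotp x (P y) = dotp (P x) (P y).
Proof. by rewrite -{1}(PQ x) dotpDl dotQP addr0. Qed.
Lemma dotQ x y : dotp x (Q y) = dotp (Q x) (Q y).
Proof. by rewrite -{1}(PQ x) dotpDl dotPQ add0r. Qed.

Lemma dot_split x : dotp x x = dotp (P x) (P x) + dotp (Q x) (Q x).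
Proof.
rewrite -{1 2}(PQ x) dotpDl !dotpDr dotPQ dotQP; ring.
Qed.

End Proj.


Lemma quad_lemma (R : realType) (A B : R) : 0 <= B ->
  (forall t, 0 < t <= 1 -> 0 <= t * A + t ^+ 2 * B) -> 0 <= A.
Proof.
move=> B0 H; rewrite leNgt; apply/negP => A0.
have D0 : 0 < B - A by lra.
pose t := - A / (2 * (B - A)).
have t0 : 0 < t by rewrite /t divr_gt0 // ?oppr_gt0 // mulr_gt0.
have t1 : t <= 1.
  by rewrite /t ler_pdivrMr ?mulr_gt0 // mul1r; lra.
have := H t; rewrite t0 t1 => /(_ isT).
have e : t * A + t ^+ 2 * B = t * (A * (B - 2 * A) / (2 * (B - A))).
  rewrite /t; field; lra.
rewrite e pmulr_rge0 // pmulr_lge0 ?invr_gt0 ?mulr_gt0 //.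
by rewrite pmulr_lge0; lra.
Qed.

Section Opt.
Variables (R : realType) (d : nat).
Implicit Types (x y z a : 'rV[R]_d).
Local Open Scope ereal_scope.

Lemma step_opt (K : 'rV[R]_d -> \bar R) (alpha : R) : (0 < alpha)%R ->
  convex_fun K -> (forall x, -oo < K x) -> forall a x (kx : R), K x = kx%:E ->
  (forall y, K x + (dotp x a + alpha / 2 * enorm x ^+ 2)%:E
      <= K y + (dotp y a + alpha / 2 * enorm y ^+ 2)%:E) ->
  forall y, K x + (dotp x (a + alpha *: x))%:E <= K y + (dotp y (a + alpha *: x))%:E.
Proof.
move=> a0 Kc Kn a x kx Kx Hmin y.
case Ky: (K y) => [ky| |]; last 2 first.
- by rewrite leey.
- by have := Kn y; rewrite Ky.
rewrite Kx -!EFinD lee_fin.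
set A := (ky - kx + dotp y (a + alpha *: x) - dotp x (a + alpha *: x))%R.
suff : (0 <= A)%R by rewrite /A; lra.
apply: (@quad_lemma _ A (alpha / 2 * dotp (y - x) (y - x))%R).
  by rewrite mulr_ge0 ?dotp_ge0 // divr_ge0 // ltW.
move=> t /andP[t0 t1].
pose z := (t *: y + (1 - t) *: x)%R.
have Kz := Kc y x t; rewrite (ltW t0) t1 /= in Kz.
have Kz' := Kz isT; rewrite Ky Kx -!EFinM -EFinD in Kz'.
have Hz := Hmin z.
have Kzr : exists kz, K z = kz%:E.
  move: Kz' (Kn z); rewrite /z; case: (K (t *: y + (1 - t) *: x)%R) => [kz| |] //.
  by move=> _ _; exists kz.
case: Kzr => kz Kz2.
rewrite Kz2 Kx -!EFinD lee_fin in Hz.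
rewrite /z Kz2 lee_fin in Kz'.
rewrite !enorm_sq in Hz.
rewrite /z !(dotpDl, dotpDr, dotpZl, dotpZr) in Hz.
rewrite /A !(dotpDl, dotpDr, dotpZl, dotpZr, dotpBl, dotpBr).
rewrite ?(dotpNl, dotpNr, opprK).
rewrite ?(@dotpC _ _ a y) ?(@dotpC _ _ a x) ?(@dotpC _ _ x y) in Hz.
rewrite ?(@dotpC _ _ a y) ?(@dotpC _ _ a x) ?(@dotpC _ _ x y).
nra.
Qed.

End Opt.

Section Opt2.
Variables (R : realType) (d : nat) (M : 'M[R]_d).
Implicit Types (x y z a : 'rV[R]_d).
Local Open Scope ereal_scope.
Local Notation P := (projMperp M).
Local Notation Q := (projM M).

Lemma J_opt (K : 'rV[R]_d -> \bar R) (alpha : R) : (0 < alpha)%R ->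
  convex_fun K -> (forall x, -oo < K x) -> forall a x (kx : R), K x = kx%:E ->
  (forall y, K x + (dotp x a + alpha / 2 * enorm x ^+ 2)%:E
      <= K y + (dotp y a + alpha / 2 * enorm y ^+ 2)%:E) ->
  forall y, (K x + (alpha / 2 * enorm (Q x) ^+ 2)%:E) + (dotp x (a + alpha *: P x))%:E
     <= (K y + (alpha / 2 * enorm (Q y) ^+ 2)%:E) + (dotp y (a + alpha *: P x))%:E.
Proof.
move=> a0 Kc Kn a x kx Kx Hmin y.
have H := step_opt a0 Kc Kn Kx Hmin y.
case Ky: (K y) => [ky| |]; last 2 first.
- by rewrite leey.
- by have := Kn y; rewrite Ky.
rewrite Kx -!EFinD lee_fin.
rewrite Kx Ky -!EFinD lee_fin in H.
have e : (a + alpha *: x = (a + alpha *: P x) + alpha *: Q x)%R.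
  by rewrite -addrA -scalerDr PQ.
rewrite e !dotpDr !dotpZr in H.
rewrite !enorm_sq.
rewrite (dotQ M x x) (dotQ M y x) in H.
have := dotp_ge0 (Q y - Q x).
rewrite !(dotpBl, dotpBr) (@dotpC _ _ (Q x) (Q y)).
move: H.
set u := dotp y (a + alpha *: P x); set v := dotp x (a + alpha *: P x).
set qq := dotp (Q y) (Q y); set qx := dotp (Q x) (Q x); set qyx := dotp (Q y) (Q x).
move=> H1 H2. have H3 := mulr_ge0 (ltW a0) H2. rewrite /u /v !dotpDr !dotpZr. nra.
Qed.

End Opt2.


Lemma coord_le_enorm (R : realType) d (v : 'rV[R]_d) j : `|v 0 j| <= enorm v.
Proof.
rewrite /enorm -sqrtr_sqr ler_sqrt ?dotp_ge0 // dotpE (bigD1 j) //= -expr2.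
by rewrite lerDl sumr_ge0 // => i _; rewrite -expr2 sqr_ge0.
Qed.

Lemma mxnorm_le_enorm (R : realType) d (v : 'rV[R]_d) : `|v| <= enorm v.
Proof.
have -> : `|v| = mx_norm v by [].
have [->|] := eqVneq (mx_norm v) 0.
  by rewrite /enorm sqrtr_ge0.
move=> /mx_norm_neq0 [[i j] ->] /=.
by rewrite (ord1 i) coord_le_enorm.
Qed.

Lemma exists_cluster (R : realType) d (u : nat -> 'rV[R]_d) B :
  (forall k, (1 <= k)%N -> enorm (u k) <= B) ->
  exists Ls : 'rV[R]_d, forall N (A : set 'rV[R]_d), nbhs Ls A ->
    exists n, (N <= n)%N /\ A (u n).
Proof.
move=> HB.
pose A0 := closed_ball_ (@Num.norm _ _) (0 : 'rV[R]_d) B.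
have cA : compact A0.
  apply: bounded_closed_compact; last exact: closed_closed_ball_.
  exists B; split; first by rewrite num_real.
  move=> M BM v; rewrite /A0 /closed_ball_ /= sub0r normrN => vB.
  exact: le_trans vB (ltW BM).
have FA : (u @ \oo) A0.
  exists 1%N => // n /= n1; rewrite /A0 /closed_ball_ /= sub0r normrN.
  exact: le_trans (mxnorm_le_enorm _) (HB n n1).
have [Ls [_ CL]] := cA (u @ \oo) _ FA.
exists Ls => N A nA.
have FN : (u @ \oo) [set v | exists n, (N <= n)%N /\ v = u n].
  by exists N => // n /= Nn; exists n.
have [v [[n [Nn ->]] An]] := CL _ A FN nA.
by exists n.
Qed.

Lemma dotp_continuous (R : realType) d (c : 'rV[R]_d) :
  continuous (fun v : 'rV[R]_d => dotp c v).
Proof.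
have -> : (fun v : 'rV[R]_d => dotp c v) =
    (fun v => \big[+%R/0]_(j <- index_enum 'I_d | true) (fun j v => c 0 j * v 0 j) j v).
  by apply: funext => v; rewrite dotpE.
apply: continuous_big; first exact: add_continuous.
move=> j _ v.
apply: continuous_comp; first exact: coord_continuous.
exact: mulrl_continuous.
Qed.

Lemma dotp_nbhs_lt (R : realType) d (c L : 'rV[R]_d) (e : R) : 0 < e ->
  nbhs L [set v | dotp c v < dotp c L + e].
Proof.
move=> e0.
have := @dotp_continuous _ _ c L.
move=> /cvgrPdist_lt /(_ e e0).
apply: filterS => v /=.
rewrite ltr_distlC => /andP[_ ?]; done.
Qed.

Lemma o1n (R : realType) (f : nat -> R) (C : R) :
  (forall n, 0 <= f n) -> (forall n, f n.+1 <= f n) ->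
  (forall n, \sum_(0 <= k < n) f k <= C) ->
  (fun n => (n.+1)%:R * f n) @ \oo --> 0.
Proof.
move=> f0 fdec fC.
have fmon : forall k m, f (k + m)%N <= f k.
  move=> k; elim=> [|m IH]; first by rewrite addn0.
  by rewrite addnS; apply: le_trans (fdec _) IH.
pose S n := \sum_(0 <= k < n) f k.
have hs : has_sup (range S).
  split; first by exists (S 0%N); exists 0%N.
  by exists C => _ [n _ <-]; apply: fC.
apply/cvgrPdist_lt => eps eps0.
have [_ [N _ <-] SN] := sup_adherent (divr_gt0 eps0 (ltr0n _ 4)) hs.
near=> n.
have Nn : (2 * N <= n)%N by near: n; apply: nbhs_infty_ge.
rewrite sub0r normrN ger0_norm ?mulr_ge0 //.
have Sub : S n.+1 <= sup (range S) by apply: sup_upper_bound => //; exists n.+1.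
have split : S n.+1 = S N + \sum_(N <= k < n.+1) f k.
  rewrite /S (big_cat_nat _ (m := 0%N) (n := N)) //.
  by apply: leq_trans (leqnSn _); apply: leq_trans Nn; rewrite leq_pmull.
have lb : (n.+1 - N)%:R * f n <= \sum_(N <= k < n.+1) f k.
  have -> : (n.+1 - N)%:R * f n = \sum_(N <= k < n.+1) f n.
    by rewrite sumr_const_nat mulr_natl.
  rewrite big_nat [X in _ <= X]big_nat.
  apply: ler_sum => k /andP[_ kn].
  have -> : n = (k + (n - k))%N by rewrite subnKC // -ltnS.
  exact: fmon.
have e2 : (n.+1)%:R <= 2 * (n.+1 - N)%:R :> R.
  rewrite -natrM ler_nat; lia.
have fn0 := f0 n.
have : (n.+1)%:R * f n <= 2 * ((n.+1 - N)%:R * f n).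
  by rewrite mulrA ler_wpM2r.
lra.
Unshelve. all: by end_near.
Qed.

Unset Implicit Arguments.
Unset Strict Implicit.

Theorem corollary2 (R : realType) (d : nat) (M : 'M[R]_d) (alpha : R)
  (K : 'rV[R]_d -> \bar R) (x Lam : nat -> 'rV[R]_d) :
  0 < alpha ->
  feasible K -> convex_fun K ->
  Lam 0%N = 0 ->
  (forall k : nat, forall y : 'rV[R]_d,
     (K (x k.+1) + (dotp (x k.+1) (Lam k) + alpha / 2 * enorm (x k.+1) ^+ 2)%:E
      <= K y + (dotp y (Lam k) + alpha / 2 * enorm y ^+ 2)%:E)%E) ->
  (forall k : nat, Lam k.+1 = Lam k + alpha *: projMperp M (x k.+1)) ->
  let J := fun y : 'rV[R]_d =>
    (K y + (alpha / 2 * enorm (projM M y) ^+ 2)%:E)%E in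
  let h := fun L : 'rV[R]_d =>
    ereal_inf [set (J y + (dotp y (projMperp M L))%:E)%E | y in [set: 'rV[R]_d]] in
  (exists B : R, forall k : nat, (1 <= k)%N -> enorm (Lam k) <= B) ->
  let S := [set L : 'rV[R]_d | forall L' : 'rV[R]_d, (h L' <= h L)%E] in
  let c := ereal_sup (range h) in
  [/\ S !=set0,
      (forall L, S L -> forall k : nat, (1 <= k)%N ->
         enorm (Lam k.+1 - L) <= enorm (Lam k - L))
    & (fun k : nat => (k%:R)%:E * (c - h (Lam k)))%E @ \oo --> 0%E].
Proof.
move=> a0 [_ [[[y0 Ky0] Kn] _]] Kc L0 Hmin HL J h [B HB] S c.
have LP : forall k, projMperp M (Lam k) = Lam k.
  elim=> [|k IH]; first by rewrite L0 P0.
  by rewrite HL PD PZ PP IH.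
have Kfin : forall k, K (x k.+1) = (fine (K (x k.+1)))%:E.
  move=> k; have := Hmin k y0; have := Kn (x k.+1).
  case: (K (x k.+1)) => // _.
  move: Ky0; case: (K y0) => [ky| |] //= _.
pose g k := fine (K (x k)) + alpha / 2 * enorm (projM M (x k)) ^+ 2 + dotp (x k) (Lam k).
have Jx : forall k, J (x k.+1) =
    (fine (K (x k.+1)) + alpha / 2 * enorm (projM M (x k.+1)) ^+ 2)%:E.
  by move=> k; rewrite /J Kfin.
have Jopt : forall k y, ((g k.+1)%:E <= J y + (dotp y (Lam k.+1))%:E)%E.
  move=> k y; have := J_opt M a0 Kc Kn (Kfin k) (Hmin k) y.
  by rewrite -HL [K (x k.+1)]Kfin -!EFinD.
have hLam : forall k, h (Lam k.+1) = (g k.+1)%:E.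
  move=> k; apply/eqP; rewrite eq_le; apply/andP; split.
  - by apply: ereal_inf_lbound; exists (x k.+1) => //; rewrite LP Jx -EFinD.
  - by apply: le_ereal_inf_tmp => _ [y _ <-]; rewrite LP; exact: Jopt.
have hub : forall L k, (h L <= (g k.+1 + alpha^-1 *
     dotp (Lam k.+1 - Lam k) (projMperp M L - Lam k.+1))%:E)%E.
  move=> L k.
  have H1 : (h L <= J (x k.+1) + (dotp (x k.+1) (projMperp M L))%:E)%E.
    by apply: ereal_inf_lbound; exists (x k.+1).
  apply: le_trans H1 _; rewrite Jx -EFinD lee_fin.
  have -> : Lam k.+1 - Lam k = alpha *: projMperp M (x k.+1).
    by rewrite HL addrC addKr.
  have -> : projMperp M L - Lam k.+1 = projMperp M (L - Lam k.+1).
    by rewrite PB LP.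
  rewrite dotpZl -dotP PB LP dotpBr mulKf ?gt_eqF // /g.
  lra.
have gmono : forall k, g k.+1 <= g k.+2.
  move=> k; have := hub (Lam k.+1) k.+1; rewrite hLam LP lee_fin.
  have ai : 0 <= alpha^-1 by rewrite invr_ge0 ltW.
  rewrite -[Lam k.+1 - Lam k.+2]opprB dotpNr.
  have := mulr_ge0 ai (dotp_ge0 (Lam k.+2 - Lam k.+1)).
  lra.
have hfin : forall L, (h L < +oo)%E.
  by move=> L; apply: le_lt_trans (hub L 0%N) _; rewrite ltey.
have step3 : forall L (hL : R) k, h L = hL%:E ->
    dotp (Lam k.+1 - projMperp M L) (Lam k.+1 - projMperp M L) <=
    dotp (Lam k - projMperp M L) (Lam k - projMperp M L) - 2 * alpha * (hL - g k.+1).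
  move=> L hL k e; have := hub L k; rewrite e lee_fin => H.
  have ee : Lam k - projMperp M L = (Lam k.+1 - projMperp M L) - (Lam k.+1 - Lam k).
    by rewrite opprB [RHS]addrC [RHS]addrA subrK.
  rewrite ee; move: H; rewrite -(opprB (Lam k.+1)) dotpNr.
  set w := Lam k.+1 - projMperp M L; set D := Lam k.+1 - Lam k => H; clearbody w D.
  have H' := ler_wpM2l (ltW a0) H.
  rewrite mulrDr mulrA mulfV ?gt_eqF // mul1r in H'.
  have := dotp_ge0 D.
  rewrite !(dotpBl, dotpBr) (dotpC w D).
  nra.
have Obound : forall L hL, h L = hL%:E -> forall n,
    dotp (Lam n - projMperp M L) (Lam n - projMperp M L) + 2 * alpha * (n%:R * (hL - g n))
    <= dotp (projMperp M L) (projMperp M L).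
  move=> L hL e; elim=> [|n IH].
    by rewrite L0 sub0r dotpNl dotpNr opprK mul0r mulr0 addr0.
  have H3 := step3 L hL n e.
  case: n IH H3 => [|n] IH H3.
    move: IH; rewrite mul0r mulr0 addr0 mul1r => IH; lra.
  have gm := gmono n.
  have n0 : (0 : R) <= n.+1%:R by [].
  have gm0 : 0 <= g n.+2 - g n.+1 by rewrite subr_ge0.
  have := mulr_ge0 (mulr_ge0 (ltW a0) n0) gm0.
  rewrite [n.+2%:R]mulrS.
  nra.
have Hrate : forall L n, (0 < n)%N ->
    (h L <= (g n + dotp (projMperp M L) (projMperp M L) / (2 * alpha * n%:R))%:E)%E.
  move=> L n n0; case e: (h L) => [hL| |]; last 2 first.
  - by have := hfin L; rewrite e.
  - by rewrite leNye.
  rewrite lee_fin.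
  have := Obound L hL e n.
  have := dotp_ge0 (Lam n - projMperp M L).
  have pos : 0 < 2 * alpha * n%:R by rewrite !mulr_gt0 // ltr0n.
  move=> H1 H2.
  rewrite -lerBlDl ler_pdivlMr //.
  nra.
have dPsym : forall y v, dotp y (projMperp M v) = dotp (projMperp M y) v.
  by move=> y v; rewrite dotP dotpC -dotP dotpC.
have [Ls HLs] := exists_cluster HB.
have Lsmax : forall L, (h L <= h Ls)%E.
  move=> L; apply: le_ereal_inf_tmp => _ [y _ <-].
  case hLe : (h L) => [hL| |]; last 2 first.
  - by have := hfin L; rewrite hLe.
  - by rewrite leNye.
  case Jy : (J y) => [jy| |]; last 2 first.
  - by rewrite leey.
  - by move: Jy; rewrite /J; have := Kn y; case: (K y).
  rewrite -EFinD lee_fin leNgt; apply/negP => Hlt.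
  set del := hL - (jy + dotp y (projMperp M Ls)).
  have del0 : 0 < del by rewrite /del subr_gt0.
  set X := dotp (projMperp M L) (projMperp M L) / (alpha * del).
  have X0 : 0 <= X by rewrite /X divr_ge0 ?dotp_ge0 // mulr_ge0 // ltW.
  have HX := archi_boundP X0.
  set N := Num.bound X in HX.
  have nb := dotp_nbhs_lt (projMperp M y) Ls (divr_gt0 del0 (ltr0n _ 2)).
  have [n [Nn Hn]] := HLs N.+1 _ nb.
  rewrite /= -dPsym in Hn.
  case: n Nn Hn => // n Nn Hn.
  have H1 : (h (Lam n.+1) <= J y + (dotp y (projMperp M (Lam n.+1)))%:E)%E.
    by apply: ereal_inf_lbound; exists y.
  rewrite hLam Jy -EFinD lee_fin in H1.
  have H2 := Hrate L n.+1 isT; rewrite hLe lee_fin in H2.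
  have NX : X < n.+1%:R by apply: lt_le_trans HX _; rewrite ler_nat; lia.
  rewrite /X ltr_pdivrMr ?mulr_gt0 // in NX.
  have pos : 0 < 2 * alpha * n.+1%:R by rewrite !mulr_gt0 // ltr0n.
  have H3 : dotp (projMperp M L) (projMperp M L) / (2 * alpha * n.+1%:R) < del / 2.
    rewrite ltr_pdivrMr //.
    have -> : del / 2 * (2 * alpha * n.+1%:R) = n.+1%:R * (alpha * del) by field.
    nra.
  rewrite /del in Hn H3.
  rewrite -dPsym in Hn. clear NX pos. move: H2 H3; set q := (_ / (2 * alpha * _)) => H2 H3. lra.
have [hs hsE] : exists hs : R, h Ls = hs%:E.
  have := Lsmax (Lam 1%N); rewrite hLam.
  have := hfin Ls; case: (h Ls) => [hs| |] //; first by exists hs.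
have cE : c = hs%:E.
  rewrite -hsE; apply/eqP; rewrite eq_le; apply/andP; split.
  - by apply: ge_ereal_sup => _ [L _ <-]; exact: Lsmax.
  - by apply: le_ereal_sup_tmp; exists (h Ls) => //; exists Ls.
have gle : forall k, g k.+1 <= hs.
  by move=> k; have := Lsmax (Lam k.+1); rewrite hLam hsE lee_fin.
have split2 : forall L j, dotp (Lam j - L) (Lam j - L) =
    dotp (Lam j - projMperp M L) (Lam j - projMperp M L) + dotp (projM M L) (projM M L).
  move=> L j.
  have e1 : Lam j - L = projMperp M (Lam j - L) - projM M L.
    rewrite -{1}(PQ M (Lam j - L)) QB -{2}(LP j) QP0 sub0r.
    by [].
  rewrite e1 PB LP !(dotpBl, dotpBr).
  have z1 : dotp (Lam j) (projM M L) = 0 by rewrite -{1}(LP j) dotPQ.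
  have z2 : dotp (projM M L) (Lam j) = 0 by rewrite dotpC z1.
  rewrite z1 z2 dotPQ dotQP; lra.
split.
- by exists Ls => L; exact: Lsmax.
- move=> L SL k _.
  have [hL hLE] : exists hL : R, h L = hL%:E.
    have := SL (Lam 1%N); rewrite hLam.
    have := hfin L; case: (h L) => [hL| |] //; first by exists hL.
  have gk : g k.+1 <= hL by have := SL (Lam k.+1); rewrite hLam hLE lee_fin.
  have := step3 L hL k hLE.
  have gk0 : 0 <= hL - g k.+1 by rewrite subr_ge0.
  have := mulr_ge0 (ltW a0) gk0.
  move=> H1 H2.
  apply: enorm_le; rewrite (split2 L k) (split2 L k.+1); lra.
- have Ob2 : forall n, dotp (Lam n - projMperp M Ls) (Lam n - projMperp M Ls) +
      2 * alpha * \sum_(0 <= k < n) (hs - g k.+1)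
      <= dotp (projMperp M Ls) (projMperp M Ls).
    elim=> [|n IH].
      by rewrite L0 sub0r dotpNl dotpNr opprK big_geq // mulr0 addr0.
    rewrite big_nat_recr //=.
    have := step3 Ls hs n hsE.
    lra.
  have fconv := @o1n R (fun k => hs - g k.+1)
    (dotp (projMperp M Ls) (projMperp M Ls) / (2 * alpha)).
  have pos : 0 < 2 * alpha by rewrite mulr_gt0.
    have f0 : forall n, 0 <= hs - g n.+1 by move=> n; rewrite subr_ge0.
  have f1 : forall n, hs - g n.+2 <= hs - g n.+1.
    by move=> n; have := gmono n; lra.
  have f2 : forall n, \sum_(0 <= k < n) (hs - g k.+1) <=
      dotp (projMperp M Ls) (projMperp M Ls) / (2 * alpha).
    move=> n; rewrite ler_pdivlMr //.
    have := Ob2 n; have := dotp_ge0 (Lam n - projMperp M Ls); lra.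
  have {f0 f1 f2}fconv := fconv f0 f1 f2.
  rewrite cE; apply: cvg_EFin.
    by exists 1%N => // -[|k] //= _; rewrite hLam -EFinB -EFinM.
  rewrite -cvg_shiftS.
  have -> : [sequence (fine \o (fun k : nat => (k%:R)%:E * (hs%:E - h (Lam k)))%E) n.+1]_n
      = (fun n => (n.+1)%:R * (hs - g n.+1)).
    by apply: funext => n /=; rewrite hLam -EFinB -EFinM.
  exact: fconv.
Qed.
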